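(* Let $(X,\mathrm{dist})$ be a metric space and $\Sigma$ a compact metric space. Let $T(h):\Sigma\to\Sigma$, $h\ge0$, be a semigroup with $T(h)\Sigma=\Sigma$ for all $h\ge0$, and let $\{U_\sigma(t,\tau)\}_{\sigma\in\Sigma}$ be a family of processes on $X$ satisfying $U_\sigma(h+t,h+\tau)=U_{T(h)\sigma}(t,\tau)$ for all $\sigma\in\Sigma$, $h\ge0$, $t\ge\tau$. Assume the family is uniformly asymptotically compact, with uniform global attractor $A_\Sigma$. Assume there exists $h_\star>0$ such that the maps $(x,\sigma)\mapsto U_\sigma(h_\star,0)x$ from $X\times\Sigma$ to $X$ and $\sigma\mapsto T(h_\star)\sigma$ from $\Sigma$ to $\Sigma$ are closed. Then $A_\Sigma=\bigcup_{\sigma\in\Sigma}\mathcal{K}_\sigma(0)$.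
   Context: A process on $X$ is a family of maps $U(t,\tau):X\to X$, indexed by reals $t\ge\tau$, with $U(\tau,\tau)=\mathrm{id}_X$ and $U(t,\tau)=U(t,s)U(s,\tau)$ for $t\ge s\ge\tau$. For nonempty $B,C\subset X$, $\delta_X(B,C)=\sup_{x\in B}\inf_{\xi\in C}\mathrm{dist}(x,\xi)$. A set $K\subset X$ is uniformly attracting for the family if for every bounded $C\subset X$, $\lim_{t-\tau\to\infty}\sup_{\sigma\in\Sigma}\delta_X(U_\sigma(t,\tau)C,K)=0$. The family is uniformly asymptotically compact if there is a compact uniformly attracting set; the uniform global attractor $A_\Sigma$ is the compact uniformly attracting set contained in every compact uniformly attracting set. A map $f:Y\to Z$ between metric spaces is closed if $f(y)=z$ whenever $y_n\to y$ and $f(y_n)\to z$. For fixed $\sigma\in\Sigma$, a complete bounded trajectory of $U_\sigma(t,\tau)$ is a function $x:\mathbb{R}\to X$ with $\{x(s)\}_{s\in\mathbb{R}}$ bounded and $x(s)=U_\sigma(s,\tau)x(\tau)$ for all $s\ge\tau$, $\tau\in\mathbb{R}$. The kernel section at time $t$ is $\mathcal{K}_\sigma(t)=\{x(t): x \text{ is a complete bounded trajectory of } U_\sigma(t,\tau)\}$. *)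

(* Defs.v *)
From Stdlib Require Import Reals List.
Open Scope R_scope.

Definition is_metric {X : Type} (d : X -> X -> R) : Prop :=
  (forall x y, 0 <= d x y) /\
  (forall x y, d x y = 0 <-> x = y) /\
  (forall x y, d x y = d y x) /\
  (forall x y z, d x z <= d x y + d y z).

Definition bounded_set {X : Type} (d : X -> X -> R) (B : X -> Prop) : Prop :=
  exists x0 r, forall x, B x -> d x0 x <= r.

Definition open_set {X : Type} (d : X -> X -> R) (U : X -> Prop) : Prop :=
  forall x, U x -> exists e, 0 < e /\ forall y, d x y < e -> U y.

Definition compact_set {X : Type} (d : X -> X -> R) (K : X -> Prop) : Prop :=
  forall (I : Type) (U : I -> X -> Prop),
    (forall i, open_set d (U i)) ->
    (forall x, K x -> exists i, U i x) ->
    exists l : list I, forall x, K x -> exists i, In i l /\ U i x.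

Definition seq_conv {X : Type} (d : X -> X -> R) (u : nat -> X) (l : X) : Prop :=
  forall e, 0 < e -> exists N, forall n, (N <= n)%nat -> d (u n) l < e.

(* delta_le d B C e  <->  delta_X(B,C) = sup_{x in B} inf_{xi in C} d x xi <= e *)
Definition delta_le {X : Type} (d : X -> X -> R) (B C : X -> Prop) (e : R) : Prop :=
  forall x, B x -> forall e', e < e' -> exists xi, C xi /\ d x xi < e'.

Definition image {X Y : Type} (f : X -> Y) (B : X -> Prop) : Y -> Prop :=
  fun y => exists x, B x /\ f x = y.

Definition is_process_family {X S : Type} (U : S -> R -> R -> X -> X) : Prop :=
  forall s,
    (forall tau x, U s tau tau x = x) /\
    (forall t r tau x, r <= t -> tau <= r -> U s t tau x = U s t r (U s r tau x)).

Definition unif_attracting {X S : Type} (d : X -> X -> R)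
    (U : S -> R -> R -> X -> X) (K : X -> Prop) : Prop :=
  forall C, bounded_set d C ->
    forall e, 0 < e -> exists T0, forall t tau, T0 <= t - tau ->
      forall s, delta_le d (image (U s t tau) C) K e.

Definition complete_bounded_traj {X S : Type} (d : X -> X -> R)
    (U : S -> R -> R -> X -> X) (s : S) (x : R -> X) : Prop :=
  bounded_set d (fun y => exists r, x r = y) /\
  (forall sv tau, tau <= sv -> x sv = U s sv tau (x tau)).

Definition kernel_section {X S : Type} (d : X -> X -> R)
    (U : S -> R -> R -> X -> X) (s : S) (t : R) : X -> Prop :=
  fun y => exists x, complete_bounded_traj d U s x /\ x t = y.

(* Main.v *)
Require Import Defs.
From Stdlib Require Import Reals List Lra Lia ZArith Classical ClassicalEpsilon.
Open Scope R_scope.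
Lemma arch_nat (r : R) : exists N : nat, r < INR N.
Proof.
  destruct (archimed r) as [H1 _].
  destruct (Z_lt_le_dec (up r) 0) as [Hn|Hp].
  - exists 0%nat. simpl. apply IZR_lt in Hn. lra.
  - exists (Z.to_nat (up r)). rewrite INR_IZR_INZ, Z2Nat.id; auto.
Qed.

Section M.
Context {X : Type} (d : X -> X -> R) (Hd : is_metric d).

Lemma d_pos x y : 0 <= d x y. Proof. apply (proj1 Hd). Qed.
Lemma d_refl x : d x x = 0. Proof. apply (proj1 (proj2 Hd)). reflexivity. Qed.
Lemma d_eq x y : d x y = 0 -> x = y. Proof. apply (proj1 (proj2 Hd)). Qed.
Lemma d_sym x y : d x y = d y x. Proof. apply (proj1 (proj2 (proj2 Hd))). Qed.
Lemma d_tri x y z : d x z <= d x y + d y z. Proof. apply (proj2 (proj2 (proj2 Hd))). Qed.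

Lemma sub_conv (u : nat -> X) l (chi : nat -> nat) :
  seq_conv d u l -> (forall n, (n <= chi n)%nat) -> seq_conv d (fun n => u (chi n)) l.
Proof.
  intros H Hc e He. destruct (H e He) as [N HN]. exists N. intros n Hn.
  apply HN. specialize (Hc n). lia.
Qed.

Lemma ev_conv (u v : nat -> X) l :
  seq_conv d u l -> (exists N, forall n, (N <= n)%nat -> v n = u n) -> seq_conv d v l.
Proof.
  intros H [N0 HN0] e He. destruct (H e He) as [N HN]. exists (Nat.max N N0).
  intros n Hn. rewrite HN0 by lia. apply HN. lia.
Qed.

Lemma conv_unique (u : nat -> X) l1 l2 :
  seq_conv d u l1 -> seq_conv d u l2 -> l1 = l2.
Proof.
  intros H1 H2. apply d_eq. destruct (Req_dec (d l1 l2) 0) as [E|E]; auto.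
  assert (Hp : 0 < d l1 l2) by (pose proof (d_pos l1 l2); destruct (Rle_lt_or_eq_dec _ _ H); auto; congruence). exfalso.
  destruct (H1 (d l1 l2 / 2)) as [N1 HN1]; [lra|].
  destruct (H2 (d l1 l2 / 2)) as [N2 HN2]; [lra|].
  specialize (HN1 (Nat.max N1 N2) ltac:(lia)). specialize (HN2 (Nat.max N1 N2) ltac:(lia)).
  pose proof (d_tri l1 (u (Nat.max N1 N2)) l2) as Ht. rewrite (d_sym l1 (u _)) in Ht. lra.
Qed.

Definition near (K : X -> Prop) (u : nat -> X) :=
  forall e, 0 < e -> exists N, forall n, (N <= n)%nat -> exists k, K k /\ d (u n) k < e.

Definition cluster (u : nat -> X) p :=
  forall e, 0 < e -> forall N, exists n, (N <= n)%nat /\ d (u n) p < e.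

Lemma cluster_exists K (HK : compact_set d K) u (Hu : near K u) :
  exists p, K p /\ cluster u p.
Proof.
  apply NNPP. intro Hno.
  assert (Hp : forall p, K p -> exists (e : posreal) (N : nat),
     forall n, (N <= n)%nat -> e <= d (u n) p).
  { intros p Kp. apply NNPP. intro H. apply Hno. exists p. split; auto.
    intros e He N. apply NNPP. intro H2. apply H. exists (mkposreal e He), N.
    intros n Hn. simpl. apply Rnot_lt_le. intro H3. apply H2. exists n; auto. }
  set (V := fun (i : X * posreal * nat) (z : X) =>
     let '(p, e, N) := i in K p /\ (forall n, (N <= n)%nat -> e <= d (u n) p) /\ d p z < e / 2).
  destruct (HK _ V) as [l Hl].
  - intros [[p e] N] z Hz. simpl in Hz. destruct Hz as [Kp [HN Hz]].
    exists (e / 2 - d p z). split; [lra|]. intros y Hy. simpl. split; auto. split; auto.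
    pose proof (d_tri p z y). lra.
  - intros x Kx. destruct (Hp x Kx) as [e [N HN]]. exists (x, e, N). simpl.
    split; auto. split; auto. rewrite d_refl. destruct e; simpl; lra.
  - set (emin := fold_right (fun (i : X * posreal * nat) acc => Rmin acc (pos (snd (fst i)))) 1 l).
    set (Nmax := fold_right (fun (i : X * posreal * nat) acc => Nat.max acc (snd i)) 0%nat l).
    assert (Hemin : 0 < emin /\ forall i, In i l -> emin <= pos (snd (fst i))).
    { unfold emin; clear. induction l as [|i l IH]; simpl.
      - split; [lra| tauto].
      - destruct IH as [IH1 IH2]. split.
        + apply Rmin_pos; auto. apply cond_pos.
        + intros j [<-|Hj].
          * apply Rmin_r.
          * eapply Rle_trans; [apply Rmin_l | auto]. }
    assert (HNmax : forall i, In i l -> (snd i <= Nmax)%nat).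
    { unfold Nmax; clear. induction l as [|i l IH]; simpl; [tauto|].
      intros j [<-|Hj]; [lia|]. specialize (IH j Hj). lia. }
    destruct Hemin as [He0 Hemin].
    destruct (Hu (emin / 2)) as [N1 HN1]; [lra|].
    destruct (HN1 (Nat.max N1 Nmax) ltac:(lia)) as [k [Kk Hk]].
    destruct (Hl k Kk) as [[[p e] N] [Hin Hv]]. simpl in Hv.
    destruct Hv as [Kp [HN Hpk]].
    specialize (Hemin _ Hin). specialize (HNmax _ Hin). simpl in Hemin, HNmax.
    specialize (HN (Nat.max N1 Nmax) ltac:(lia)).
    pose proof (d_tri (u (Nat.max N1 Nmax)) k p). rewrite (d_sym k p) in H. lra.
Qed.

Lemma cluster_subseq u p : cluster u p ->
  exists chi : nat -> nat, (forall n, (n <= chi n)%nat) /\ seq_conv d (fun n => u (chi n)) p.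
Proof.
  intros Hc.
  assert (H : forall n, {m | (n <= m)%nat /\ d (u m) p < / (INR n + 1)}).
  { intro n. apply constructive_indefinite_description. apply Hc.
    apply Rinv_0_lt_compat. pose proof (pos_INR n). lra. }
  exists (fun n => proj1_sig (H n)). split.
  - intro n. destruct (H n); simpl; tauto.
  - intros e He. destruct (arch_nat (/ e)) as [N HN]. exists N. intros n Hn.
    destruct (H n) as [m [Hm1 Hm2]]; simpl.
    eapply Rlt_le_trans; [apply Hm2|].
    apply le_INR in Hn. pose proof (pos_INR N).
    assert (0 < / e) by (apply Rinv_0_lt_compat; lra).
    apply Rle_trans with (/ (/ e)).
    + apply Rinv_le_contravar; lra.
    + rewrite Rinv_inv. lra.
Qed.

Lemma compact_closed K (HK : compact_set d K) y :
  (forall e, 0 < e -> exists k, K k /\ d y k < e) -> K y.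
Proof.
  intros H. destruct (cluster_exists K HK (fun _ => y)) as [p [Kp Hc]].
  - intros e He. exists 0%nat. intros; auto.
  - replace y with p; auto. symmetry. apply d_eq.
    pose proof (d_pos y p). destruct (Rle_lt_or_eq_dec _ _ H0); auto.
    destruct (Hc (d y p) ltac:(lra) 0%nat) as [n [_ Hn]]. lra.
Qed.

Lemma compact_bounded K (HK : compact_set d K) a0 : K a0 -> bounded_set d K.
Proof.
  intros Ka0.
  destruct (HK nat (fun n z => d a0 z < INR n)) as [l Hl].
  - intros n z Hz. exists (INR n - d a0 z). split; [lra|]. intros y Hy.
    pose proof (d_tri a0 z y). lra.
  - intros x _. destruct (arch_nat (d a0 x)) as [N HN]. exists N; auto.
  - exists a0, (INR (fold_right Nat.max 0%nat l)). intros x Kx.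
    destruct (Hl x Kx) as [i [Hi Hx]].
    assert (i <= fold_right Nat.max 0 l)%nat.
    { clear -Hi. induction l; simpl in *; [tauto|]. destruct Hi as [<-|Hi]; [lia|].
      specialize (IHl Hi). lia. }
    apply le_INR in H. lra.
Qed.

Lemma closed_sub_compact K F (HK : compact_set d K)
  (HF : forall y, (forall e, 0 < e -> exists b, F b /\ d y b < e) -> F y)
  (HFK : forall y, F y -> K y) : compact_set d F.
Proof.
  intros I V HV Hcov.
  set (W := fun (o : option I) z => match o with Some i => V i z | None => ~ F z end).
  destruct (HK _ W) as [l Hl].
  - intros [i|] z Hz; simpl in Hz.
    + apply HV; auto.
    + assert (exists e, 0 < e /\ forall b, F b -> e <= d z b) as [e [He Hb]].
      { apply NNPP. intro H. apply Hz. apply HF. intros e He. apply NNPP. intro H2.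
        apply H. exists e. split; auto. intros b Fb. apply Rnot_lt_le. intro.
        apply H2. exists b. auto. }
      exists e. split; auto. intros y Hy Fy. specialize (Hb y Fy). lra.
  - intros x Kx. destruct (classic (F x)) as [Fx|nFx].
    + destruct (Hcov x Fx) as [i Hi]. exists (Some i). auto.
    + exists None. auto.
  - exists (flat_map (fun o => match o with Some i => i :: nil | None => nil end) l).
    intros x Fx. destruct (Hl x (HFK x Fx)) as [[i|] [Hin Hw]]; simpl in Hw.
    + exists i. split; auto. apply in_flat_map. exists (Some i). simpl. auto.
    + contradiction.
Qed.

Lemma inv_conv (u : nat -> X) l (chi : nat -> nat) :
  (forall n, (n <= chi n)%nat) -> (forall n, d (u n) l < / (INR n + 1)) ->
  seq_conv d (fun n => u (chi n)) l.
Proof.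
  intros Hc H e He. destruct (arch_nat (/ e)) as [N HN]. exists N. intros n Hn.
  eapply Rlt_le_trans; [apply H|].
  assert (Hn' : (N <= chi n)%nat) by (specialize (Hc n); lia).
  apply le_INR in Hn'. pose proof (pos_INR N).
  assert (0 < / e) by (apply Rinv_0_lt_compat; lra).
  apply Rle_trans with (/ (/ e)).
  + apply Rinv_le_contravar; lra.
  + rewrite Rinv_inv. lra.
Qed.

End M.

Theorem theorem5p3
  (X S : Type) (d : X -> X -> R) (dS : S -> S -> R)
  (Hd : is_metric d) (HdS : is_metric dS)
  (HScomp : compact_set dS (fun _ => True))
  (T : R -> S -> S)
  (HT0 : forall s, T 0 s = s)
  (HTsg : forall h1 h2 s, 0 <= h1 -> 0 <= h2 -> T (h1 + h2) s = T h1 (T h2 s))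
  (HTsurj : forall h, 0 <= h -> forall s', exists s, T h s = s')
  (U : S -> R -> R -> X -> X)
  (HU : is_process_family U)
  (Htransl : forall s h t tau x, 0 <= h -> tau <= t ->
      U s (h + t) (h + tau) x = U (T h s) t tau x)
  (Hcompact_attr : exists K, compact_set d K /\ unif_attracting d U K)
  (A : X -> Prop)
  (HA_comp : compact_set d A) (HA_attr : unif_attracting d U A)
  (HA_min : forall K, compact_set d K -> unif_attracting d U K ->
      forall x, A x -> K x)
  (hstar : R) (Hhstar : 0 < hstar)
  (HUclosed : forall (xn : nat -> X) (sn : nat -> S) (x : X) (s : S) (z : X),
      seq_conv d xn x -> seq_conv dS sn s ->
      seq_conv d (fun n => U (sn n) hstar 0 (xn n)) z ->
      U s hstar 0 x = z)
  (HTclosed : forall (sn : nat -> S) (s s' : S),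
      seq_conv dS sn s -> seq_conv dS (fun n => T hstar (sn n)) s' ->
      T hstar s = s') :
  forall x, A x <-> exists s, kernel_section d U s 0 x.
Proof.
  assert (HUid : forall s tau x, U s tau tau x = x) by (intros; apply (proj1 (HU s))).
  assert (HUc : forall s t r tau x, r <= t -> tau <= r -> U s t tau x = U s t r (U s r tau x))
    by (intros; apply (proj2 (HU s)); auto).
  assert (Hkh : forall k : nat, 0 <= INR k * hstar)
    by (intro k; apply Rmult_le_pos; [apply pos_INR | lra]).
  assert (Hpre : forall s, {s0 | T hstar s0 = s}).
  { intro s. apply constructive_indefinite_description. apply HTsurj; lra. }
  set (pre := fun s => proj1_sig (Hpre s)).
  assert (Hpre1 : forall s, T hstar (pre s) = s) by (intro s; unfold pre; destruct (Hpre s); auto).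
  clearbody pre.
  assert (Hiter : forall k s, T (INR k * hstar) (Nat.iter k pre s) = s).
  { induction k; intro s.
    - simpl. rewrite Rmult_0_l, HT0; auto.
    - rewrite S_INR. replace ((INR k + 1) * hstar) with (INR k * hstar + hstar) by ring.
      simpl Nat.iter. rewrite HTsg; [| apply Hkh | lra]. rewrite Hpre1. apply IHk. }
  assert (Kex : forall t r, exists k : nat, r <= t + INR k * hstar).
  { intros t r. destruct (arch_nat ((r - t) / hstar)) as [N HN]. exists N.
    apply Rmult_lt_compat_r with (r := hstar) in HN; [|lra].
    unfold Rdiv in HN. rewrite Rmult_assoc, Rinv_l, Rmult_1_r in HN; lra. }
  assert (Dir1 : forall s t y, kernel_section d U s t y -> A y).
  { intros s t y [x [[Hb Htr] Hxt]]. subst y. apply (compact_closed d Hd A HA_comp).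
    intros e He. destruct (HA_attr _ Hb (e/2) ltac:(lra)) as [T0 HT0'].
    assert (HT1 : T0 <= t - (t - Rabs T0)) by (pose proof (Rle_abs T0); lra).
    destruct (HT0' t (t - Rabs T0) HT1 s (x t)) with (e' := e) as [xi [Axi Hxi]].
    - exists (x (t - Rabs T0)). split. exists (t - Rabs T0); auto.
      symmetry; apply Htr. pose proof (Rabs_pos T0); lra.
    - lra.
    - exists xi; auto. }
  assert (Shift : forall s t tau, tau <= t -> exists s', forall x, U s t tau x = U s' 0 (tau - t) x).
  { intros s t tau Ht. destruct (Rle_lt_dec 0 t).
    - exists (T t s). intro x. rewrite <- Htransl by lra. f_equal; ring.
    - destruct (HTsurj (-t) ltac:(lra) s) as [s' Hs']. exists s'. intro x.
      rewrite <- Hs'. rewrite <- Htransl by lra. f_equal; ring. }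
  set (B := fun y => exists s, kernel_section d U s 0 y).
  assert (Traj : forall (zz : nat -> X) (rr : nat -> S), (forall k, A (zz k)) ->
     (forall k, T hstar (rr (Datatypes.S k)) = rr k) ->
     (forall k, U (rr (Datatypes.S k)) hstar 0 (zz (Datatypes.S k)) = zz k) ->
     kernel_section d U (rr 0%nat) 0 (zz 0%nat)).
  { intros zz rr HA HT HUz.
    assert (HTk : forall k, T (INR k * hstar) (rr k) = rr 0%nat).
    { induction k.
      - simpl. rewrite Rmult_0_l, HT0; auto.
      - rewrite S_INR. replace ((INR k + 1) * hstar) with (INR k * hstar + hstar) by ring.
        rewrite HTsg; [| apply Hkh | lra]. rewrite HT. apply IHk. }
    set (G := fun k t => U (rr k) (t + INR k * hstar) 0 (zz k)).
    assert (Gstep : forall k t, 0 <= t + INR k * hstar -> G (Datatypes.S k) t = G k t).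
    { intros k t Ht. unfold G. rewrite S_INR.
      rewrite (HUc (rr (Datatypes.S k)) (t + (INR k + 1) * hstar) hstar 0) by lra.
      rewrite HUz.
      pose proof (Htransl (rr (Datatypes.S k)) hstar (t + INR k * hstar) 0 (zz k) ltac:(lra) ltac:(lra)) as E.
      rewrite Rplus_0_r, HT in E. rewrite <- E. f_equal; ring. }
    assert (Gmono : forall m k t, 0 <= t + INR k * hstar -> G (m + k)%nat t = G k t).
    { induction m; intros k t Ht; simpl; auto.
      rewrite Gstep.
      - apply IHm; auto.
      - pose proof (le_INR k (m + k) ltac:(lia)). nra. }
    assert (Gag : forall k k' t, 0 <= t + INR k * hstar -> 0 <= t + INR k' * hstar -> G k t = G k' t).
    { intros k k' t H1 H2. destruct (Nat.le_ge_cases k k') as [Hl|Hl].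
      - replace k' with ((k' - k) + k)%nat by lia. symmetry. apply Gmono; auto.
      - replace k with ((k - k') + k')%nat by lia. apply Gmono; auto. }
    set (kt := fun t => proj1_sig (constructive_indefinite_description _ (Kex t 0))).
    assert (Hkt : forall t, 0 <= t + INR (kt t) * hstar).
    { intro t. unfold kt. destruct (constructive_indefinite_description _ _); simpl; auto. }
    set (x := fun t => G (kt t) t).
    assert (Hx : forall k t, 0 <= t + INR k * hstar -> x t = G k t).
    { intros k t Ht. unfold x. apply Gag; auto. }
    destruct (compact_bounded d Hd A HA_comp (zz 0%nat) (HA 0%nat)) as [x0 [r Hr]].
    assert (Abnd : bounded_set d A) by (exists x0, r; auto).
    destruct (HA_attr A Abnd 1 ltac:(lra)) as [T0 HT0'].
    exists x. split; [split|].
    - exists x0, (r + 2). intros y [t <-].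
      destruct (Kex t (Rabs T0)) as [k Hk]. pose proof (Rle_abs T0). pose proof (Rabs_pos T0).
      rewrite (Hx k t) by lra. unfold G.
      destruct (HT0' (t + INR k * hstar) 0 ltac:(lra) (rr k) (U (rr k) (t + INR k * hstar) 0 (zz k)))
        with (e' := 2) as [xi [Axi Hxi]].
      + exists (zz k); auto.
      + lra.
      + pose proof (Hr xi Axi). pose proof (d_tri d Hd x0 xi (U (rr k) (t + INR k * hstar) 0 (zz k))).
        rewrite (d_sym d Hd xi) in H2. lra.
    - intros sv tau Hst. destruct (Kex tau 0) as [k Hk].
      rewrite (Hx k sv) by lra. rewrite (Hx k tau) by lra. unfold G.
      rewrite <- (HTk k). rewrite <- Htransl by (auto; lra).
      rewrite (HUc (rr k) (sv + INR k * hstar) (tau + INR k * hstar) 0) by lra.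
      f_equal; ring.
    - rewrite (Hx 0%nat 0) by (simpl; lra). unfold G. simpl INR.
      replace (0 + 0 * hstar) with 0 by ring. apply HUid. }
  assert (L : forall C, bounded_set d C -> forall (sg : nat -> S) (sv : nat -> R) (c : nat -> X),
     (forall n, INR n <= sv n) -> (forall n, C (c n)) ->
     exists y, B y /\ exists chi : nat -> nat, (forall n, (n <= chi n)%nat) /\
       seq_conv d (fun n => U (sg (chi n)) 0 (- sv (chi n)) (c (chi n))) y).
  { intros C HC sg sv c Hsv Hc.
    set (rho := fun k n => Nat.iter k pre (sg n)).
    set (z := fun k n => U (sg n) (- (INR k * hstar)) (- sv n) (c n)).
    assert (F1 : forall k (phi : nat -> nat), (forall n, (n <= phi n)%nat) -> near d A (fun n => z k (phi n))).
    { intros k phi Hphi e He. destruct (HA_attr C HC (e/2) ltac:(lra)) as [T0 HT0'].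
      destruct (arch_nat (T0 + INR k * hstar)) as [N HN]. exists N. intros n Hn.
      assert (Hle : T0 <= - (INR k * hstar) - - sv (phi n)).
      { pose proof (Hsv (phi n)). pose proof (le_INR N (phi n) ltac:(specialize (Hphi n); lia)). lra. }
      destruct (HT0' _ _ Hle (sg (phi n)) (z k (phi n))) with (e' := e) as [xi [Axi Hxi]].
      - exists (c (phi n)). split; auto.
      - lra.
      - exists xi; auto. }
    assert (F2 : forall k n, INR (Datatypes.S k) * hstar <= sv n ->
               U (rho (Datatypes.S k) n) hstar 0 (z (Datatypes.S k) n) = z k n).
    { intros k n Hk. unfold z, rho.
      pose proof (Htransl (Nat.iter (Datatypes.S k) pre (sg n)) (INR (Datatypes.S k) * hstar) (- (INR k * hstar))
                   (- (INR (Datatypes.S k) * hstar)) (U (sg n) (- (INR (Datatypes.S k) * hstar)) (- sv n) (c n))) as E.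
      rewrite Hiter in E. rewrite S_INR in *.
      rewrite (HUc (sg n) (- (INR k * hstar)) (- ((INR k + 1) * hstar)) (- sv n)) by lra.
      rewrite <- E by (pose proof (Hkh (Datatypes.S k)); rewrite S_INR in *; lra).
      f_equal; ring. }
    assert (F3 : forall k n, T hstar (rho (Datatypes.S k) n) = rho k n).
    { intros k n. unfold rho. simpl. apply Hpre1. }
    assert (nearS : forall v : nat -> S, near dS (fun _ => True) v).
    { intros v e He. exists 0%nat. intros n _. exists (v n). split; auto. rewrite (d_refl dS HdS). lra. }
    set (Inv := fun k (st : X * S * (nat -> nat)) =>
       (forall n, (n <= snd st n)%nat) /\ seq_conv d (fun n => z k (snd st n)) (fst (fst st)) /\
       seq_conv dS (fun n => rho k (snd st n)) (snd (fst st)) /\ A (fst (fst st))).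
    assert (Ext : forall k (phi : nat -> nat), (forall n, (n <= phi n)%nat) ->
       exists st, Inv k st /\ exists chi : nat -> nat, (forall n, (n <= chi n)%nat) /\
          forall n, snd st n = phi (chi n)).
    { intros k phi Hphi.
      destruct (cluster_exists d Hd A HA_comp (fun n => z k (phi n)) (F1 k phi Hphi)) as [p [Ap Hp]].
      destruct (cluster_subseq d _ _ Hp) as [c1 [Hc1 Hconv1]].
      destruct (cluster_exists dS HdS (fun _ => True) HScomp (fun n => rho k (phi (c1 n))) (nearS _))
        as [q [_ Hq]].
      destruct (cluster_subseq dS _ _ Hq) as [c2 [Hc2 Hconv2]].
      exists (p, q, fun n => phi (c1 (c2 n))). split.
      - unfold Inv; simpl. split; [|split; [|split]]; auto.
        + intro n. specialize (Hc2 n). specialize (Hc1 (c2 n)). specialize (Hphi (c1 (c2 n))). lia.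
        + apply (sub_conv d (fun n => z k (phi (c1 n)))); auto.
      - exists (fun n => c1 (c2 n)). split; auto.
        intro n. specialize (Hc2 n). specialize (Hc1 (c2 n)). lia. }
    assert (Step : forall k st, Inv k st -> exists st', Inv (Datatypes.S k) st' /\
       U (snd (fst st')) hstar 0 (fst (fst st')) = fst (fst st) /\ T hstar (snd (fst st')) = snd (fst st)).
    { intros k [[zk rk] phi] [Hphi [Hz [Hr Ha]]]. simpl in *.
      destruct (Ext (Datatypes.S k) phi Hphi) as [[[zk1 rk1] psi] [HI [chi [Hchi Hpsieq]]]].
      pose proof HI as [Hpsi [Hz1 [Hr1 Ha1]]]. simpl in *.
      exists (zk1, rk1, psi). split; auto. simpl.
      assert (Hzk : seq_conv d (fun n => z k (psi n)) zk).
      { apply (ev_conv d (fun n => z k (phi (chi n)))).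
        - apply (sub_conv d (fun n => z k (phi n))); auto.
        - exists 0%nat; intros; rewrite Hpsieq; auto. }
      assert (Hrk : seq_conv dS (fun n => rho k (psi n)) rk).
      { apply (ev_conv dS (fun n => rho k (phi (chi n)))).
        - apply (sub_conv dS (fun n => rho k (phi n))); auto.
        - exists 0%nat; intros; rewrite Hpsieq; auto. }
      split.
      - apply (HUclosed (fun n => z (Datatypes.S k) (psi n)) (fun n => rho (Datatypes.S k) (psi n))); auto.
        apply (ev_conv d _ _ _ Hzk). destruct (arch_nat (INR (Datatypes.S k) * hstar)) as [N HN].
        exists N. intros n Hn. apply F2.
        pose proof (Hsv (psi n)). pose proof (le_INR N (psi n) ltac:(specialize (Hpsi n); lia)). change (INR (Datatypes.S k) * hstar <= sv (psi n)); lra.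
      - apply (HTclosed (fun n => rho (Datatypes.S k) (psi n))); auto.
        apply (ev_conv dS _ _ _ Hrk). exists 0%nat. intros n _. apply F3. }
    destruct (Ext 0%nat (fun n => n) (fun n => le_n n)) as [st0 [HI0 _]].
    assert (Hf : forall k st, exists st', Inv k st -> (Inv (Datatypes.S k) st' /\
       U (snd (fst st')) hstar 0 (fst (fst st')) = fst (fst st) /\ T hstar (snd (fst st')) = snd (fst st))).
    { intros k st. destruct (classic (Inv k st)) as [H|H].
      - destruct (Step k st H) as [st' H']. exists st'; auto.
      - exists st; tauto. }
    set (f := fun k st => proj1_sig (constructive_indefinite_description _ (Hf k st))).
    assert (Hfs : forall k st, Inv k st -> (Inv (Datatypes.S k) (f k st) /\
       U (snd (fst (f k st))) hstar 0 (fst (fst (f k st))) = fst (fst st) /\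
       T hstar (snd (fst (f k st))) = snd (fst st))).
    { intros k st H. unfold f. destruct (constructive_indefinite_description _ _); simpl; auto. }
    clearbody f.
    set (stt := fun k => nat_rect (fun _ => (X * S * (nat -> nat))%type) st0 f k).
    assert (HInv : forall k, Inv k (stt k)).
    { induction k; simpl; auto. apply (Hfs k (stt k) IHk). }
    exists (fst (fst (stt 0%nat))). split.
    - exists (snd (fst (stt 0%nat))).
      apply (Traj (fun k => fst (fst (stt k))) (fun k => snd (fst (stt k)))).
      + intro k. apply (HInv k).
      + intro k. apply (Hfs k (stt k) (HInv k)).
      + intro k. apply (Hfs k (stt k) (HInv k)).
    - exists (snd (stt 0%nat)). destruct (HInv 0%nat) as [H1 [H2 _]]. split; auto.
      apply (ev_conv d _ _ _ H2). exists 0%nat. intros n _. unfold z. simpl INR.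
      f_equal; ring. }
  intro x. split.
  - intro Ax.
    assert (Abnd : bounded_set d A) by (apply (compact_bounded d Hd A HA_comp x Ax)).
    assert (Bsub : forall y, B y -> A y) by (intros y [s Hs]; apply (Dir1 s 0 y Hs)).
    assert (Bclosed : forall y, (forall e, 0 < e -> exists b, B b /\ d y b < e) -> B y).
    { intros y Hy.
      assert (Hb : forall m : nat, {b | B b /\ d y b < / (INR m + 1)}).
      { intro m. apply constructive_indefinite_description. apply Hy.
        apply Rinv_0_lt_compat. pose proof (pos_INR m). lra. }
      assert (Hm : forall m : nat, {p : S * X | A (snd p) /\ U (fst p) 0 (- INR m) (snd p) = proj1_sig (Hb m)}).
      { intro m. apply constructive_indefinite_description.
        destruct (Hb m) as [b [Bb Hbd0]]. simpl. destruct Bb as [s [xm [[Hbd Htr] Hx0]]].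
        exists (s, xm (- INR m)). simpl. split.
        - apply (Dir1 s (- INR m)). exists xm. split; [split; auto | auto].
        - rewrite <- Hx0. symmetry. apply Htr. pose proof (pos_INR m); lra. }
      destruct (L A Abnd (fun m => fst (proj1_sig (Hm m))) (fun m => INR m)
                  (fun m => snd (proj1_sig (Hm m)))) as [y' [By' [chi [Hchi Hconv]]]].
      - intro; lra.
      - intro m; destruct (Hm m) as [p [Ap Hp0]]; simpl; auto.
      - assert (Hc2 : seq_conv d (fun n => proj1_sig (Hb (chi n))) y).
        { apply (inv_conv d (fun n => proj1_sig (Hb n))); auto.
          intro n. destruct (Hb n) as [b [Hbn0 Hbn]]; simpl. rewrite (d_sym d Hd). auto. }
        assert (Hc3 : seq_conv d (fun n => proj1_sig (Hb (chi n))) y').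
        { apply (ev_conv d _ _ _ Hconv). exists 0%nat. intros n _.
          destruct (Hm (chi n)) as [p [Hp0 Hp]]; simpl. auto. }
        rewrite (conv_unique d Hd _ _ _ Hc2 Hc3). auto. }
    assert (Bcomp : compact_set d B) by (apply (closed_sub_compact d A); auto).
    assert (Battr : unif_attracting d U B).
    { intros C HC e He. apply NNPP; intro Hn.
      assert (Hbad : forall n : nat, exists p : S * X * R, C (snd (fst p)) /\ INR n <= snd p /\
          forall xi, B xi -> e < d (U (fst (fst p)) 0 (- snd p) (snd (fst p))) xi).
      { intro n. apply NNPP. intro H1. apply Hn. exists (INR n). intros t tau Htt s.
        intros y [c [Cc Hy]] e' He'. apply NNPP. intro H2. apply H1.
        destruct (Shift s t tau) as [s' Hs']; [pose proof (pos_INR n); lra|].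
        exists (s', c, t - tau). simpl. split; auto. split; [lra|]. intros xi Bxi.
        replace (- (t - tau)) with (tau - t) by ring. rewrite <- Hs', Hy.
        destruct (Rlt_le_dec e (d y xi)) as [Hl|Hl]; auto. exfalso. apply H2.
        exists xi; split; auto; lra. }
      assert (Hf : forall n, {p : S * X * R | C (snd (fst p)) /\ INR n <= snd p /\
          forall xi, B xi -> e < d (U (fst (fst p)) 0 (- snd p) (snd (fst p))) xi})
        by (intro n; apply constructive_indefinite_description; apply Hbad).
      destruct (L C HC (fun n => fst (fst (proj1_sig (Hf n)))) (fun n => snd (proj1_sig (Hf n)))
                 (fun n => snd (fst (proj1_sig (Hf n))))) as [y [By [chi [Hchi Hconv]]]].
      - intro n; destruct (Hf n) as [p [Hq1 [Hq2 Hq3]]]; simpl; auto.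
      - intro n; destruct (Hf n) as [p [Hq1 [Hq2 Hq3]]]; simpl; auto.
      - destruct (Hconv e He) as [N HN]. specialize (HN N (le_n N)). cbv beta in HN.
        pose proof (proj2_sig (Hf (chi N))) as [_ [_ Hp]]. specialize (Hp y By). lra. }
    apply (HA_min B Bcomp Battr x Ax).
  - intros [s Hk]. apply (Dir1 s 0 x Hk).
Qed.
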